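(* Let $q\ge 2$ be an integer and let $\mathcal{R}$ be a finite family of axis-parallel rectangles in general position such that every pair of intersecting rectangles in $\mathcal{R}$ has a corner intersection and no $q+1$ rectangles of $\mathcal{R}$ are pairwise intersecting. Then the arrangement graph $A_{\mathcal{R}}$ satisfies $|V(A_{\mathcal{R}})|\le 4q\cdot|\mathcal{R}|$.
   Context: Rectangles are closed axis-parallel rectangles $X\times Y$; general position means all specifying intervals have pairwise distinct endpoints. Two intersecting rectangles have a corner intersection if one contains one or two corners of the other but neither contains the other (then their boundaries meet exactly twice). A joint is a point where the boundaries of two distinct rectangles of $\mathcal{R}$ intersect. The arrangement graph $A_{\mathcal{R}}$ has the joints as vertices, and $\{u,v\}$ is an edge iff $u,v$ are joints on the boundary of some rectangle of $\mathcal{R}$ with no other joint on that boundary between them. *)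

(* Defs.v *)
From HB Require Import structures.
From mathcomp Require Import all_boot all_order all_algebra.
From mathcomp Require Import reals.
Set Implicit Arguments. Unset Strict Implicit. Unset Printing Implicit Defensive.
Import Order.TTheory GRing.Theory Num.Theory.
Local Open Scope ring_scope.

(* A closed axis-parallel rectangle [rx1, rx2] x [ry1, ry2]. *)
Record rect (R : realType) := Rect { rx1 : R; rx2 : R; ry1 : R; ry2 : R }.

Section Rects.
Variable R : realType.
Implicit Types (r s : rect R) (p : R * R).

Definition rect_wf r : Prop := rx1 r < rx2 r /\ ry1 r < ry2 r.

Definition in_rect r p : bool :=
  (rx1 r <= p.1 <= rx2 r) && (ry1 r <= p.2 <= ry2 r).

Definition on_boundary r p : bool :=
  in_rect r p &&
  [|| p.1 == rx1 r, p.1 == rx2 r, p.2 == ry1 r | p.2 == ry2 r].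

Definition corners r : seq (R * R) :=
  [:: (rx1 r, ry1 r); (rx1 r, ry2 r); (rx2 r, ry1 r); (rx2 r, ry2 r)].

Definition rects_intersect r s : Prop := exists p, in_rect r p && in_rect s p.

Definition rect_contains r s : Prop := forall p, in_rect s p -> in_rect r p.

Definition n_corners_in r s : nat := count (in_rect r) (corners s).

Definition corner_intersection r s : Prop :=
  rects_intersect r s /\
  ((n_corners_in r s = 1%N \/ n_corners_in r s = 2%N) \/
   (n_corners_in s r = 1%N \/ n_corners_in s r = 2%N)) /\
  ~ rect_contains r s /\ ~ rect_contains s r.
End Rects.

Definition general_position (R : realType) (n : nat) (F : 'I_n -> rect R) : Prop :=
  uniq (flatten [seq [:: rx1 (F i); rx2 (F i)] | i <- enum 'I_n]) /\
  uniq (flatten [seq [:: ry1 (F i); ry2 (F i)] | i <- enum 'I_n]).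

(* joint: a point where the boundaries of two distinct rectangles meet;
   these are the vertices of the arrangement graph A_R *)
Definition is_joint (R : realType) (n : nat) (F : 'I_n -> rect R) (p : R * R) : Prop :=
  exists i j : 'I_n, i != j /\ on_boundary (F i) p /\ on_boundary (F j) p.

(* Main.v *)
Require Import Defs.
From HB Require Import structures.
From mathcomp Require Import all_boot all_order all_algebra.
From mathcomp Require Import reals.
Import Order.TTheory GRing.Theory Num.Theory.
Local Open Scope ring_scope.

Section S.
Variable R : realType.

Definition pts (r s : rect R) : seq (R * R) :=
  [:: (rx1 r, ry1 s); (rx1 r, ry2 s); (rx2 r, ry1 s); (rx2 r, ry2 s)].
Definition Qr (r s : rect R) : nat :=
  count (fun p => in_rect r p && in_rect s p) (pts r s).

Lemma flip (x y : R) : x != y -> (x <= y) = ~~ (y <= x).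
Proof. by move=> H; rewrite -ltNge lt_neqAle H. Qed.

Lemma pair_ineq (r s : rect R) : rect_wf r -> rect_wf s ->
  rx1 r != rx1 s -> rx1 r != rx2 s -> rx2 r != rx1 s -> rx2 r != rx2 s ->
  ry1 r != ry1 s -> ry1 r != ry2 s -> ry2 r != ry1 s -> ry2 r != ry2 s ->
  (rects_intersect r s -> corner_intersection r s) ->
  (Qr r s + Qr s r <= n_corners_in r s + n_corners_in s r)%N.
Proof.
case: r => a1 a2 c1 c2; case: s => b1 b2 d1 d2.
rewrite /rect_wf /= => -[ha hc] [hb hd] n11 n12 n21 n22 m11 m12 m21 m22 Hc.
have Hq : (0 < Qr (Rect a1 a2 c1 c2) (Rect b1 b2 d1 d2) + Qr (Rect b1 b2 d1 d2) (Rect a1 a2 c1 c2))%N ->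
  rects_intersect (Rect a1 a2 c1 c2) (Rect b1 b2 d1 d2).
  rewrite addn_gt0 => /orP[]; rewrite -has_count => /hasP[p _ Hp]; exists p => //.
  by rewrite andbC.
have {}Hc := fun h => proj1 (proj2 (Hc (Hq h))).
move: Hc; rewrite /Qr /n_corners_in /pts /corners /in_rect /=.
rewrite !lexx !(ltW ha) !(ltW hb) !(ltW hc) !(ltW hd) /=.
rewrite ?(flip _ _ n11) ?(flip _ _ n12) ?(flip _ _ n21) ?(flip _ _ n22) ?(flip _ _ m11) ?(flip _ _ m12) ?(flip _ _ m21) ?(flip _ _ m22).
have i1 : (b2 <= a1) ==> (b1 <= a1) by apply/implyP => h; apply: le_trans (ltW hb) h.
have i2 : (b2 <= a2) ==> (b1 <= a2) by apply/implyP => h; apply: le_trans (ltW hb) h.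
have i3 : (b1 <= a1) ==> (b1 <= a2) by apply/implyP => h; apply: le_trans h (ltW ha).
have i4 : (b2 <= a1) ==> (b2 <= a2) by apply/implyP => h; apply: le_trans h (ltW ha).
have j1 : (d2 <= c1) ==> (d1 <= c1) by apply/implyP => h; apply: le_trans (ltW hd) h.
have j2 : (d2 <= c2) ==> (d1 <= c2) by apply/implyP => h; apply: le_trans (ltW hd) h.
have j3 : (d1 <= c1) ==> (d1 <= c2) by apply/implyP => h; apply: le_trans h (ltW hc).
have j4 : (d2 <= c1) ==> (d2 <= c2) by apply/implyP => h; apply: le_trans h (ltW hc).
move: i1 i2 i3 i4 j1 j2 j3 j4.
move: (b1 <= a1) (b2 <= a1) (b1 <= a2) (b2 <= a2) (d1 <= c1) (d2 <= c1) (d1 <= c2) (d2 <= c2).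
move=> x11 x12 x21 x22 y11 y12 y21 y22.
clear.
by case: x11; case: x12; case: x21; case: x22; case: y11; case: y12; case: y21; case: y22 => //=;
  move=> *; repeat match goal with H : _ \/ _ |- _ => case: H => // end;
  match goal with H : _ -> _ |- _ => case: (H isT) => [[]|[]] end.
Qed.


End S.
Arguments pts {R}. Arguments Qr {R}. Arguments pair_ineq {R}.

Lemma uniq_pairs (T I : eqType) (g h : I -> T) (l : seq I) :
  uniq (flatten [seq [:: g i; h i] | i <- l]) ->
  forall i j, i \in l -> j \in l -> i != j ->
  [/\ g i != g j, g i != h j, h i != g j & h i != h j].
Proof.
elim: l => [//|x l IH] /=.
rewrite inE negb_or => /and3P[/andP[nxx nxl] hxl ul].
have memr : forall j, j \in l -> (g j \in flatten [seq [:: g i; h i] | i <- l]) &&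
   (h j \in flatten [seq [:: g i; h i] | i <- l]).
  move=> j jl; apply/andP; split; apply/flatten_mapP; exists j => //; by rewrite !inE eqxx ?orbT.
move=> i j /orP[/eqP->|il] /orP[/eqP->|jl] ij; first by rewrite eqxx in ij.
- have /andP[m1 m2] := memr j jl.
  split; apply/negP => /eqP E.
  + by move: nxl; rewrite E m1.
  + by move: nxl; rewrite E m2.
  + by move: hxl; rewrite E m1.
  + by move: hxl; rewrite E m2.
- have /andP[m1 m2] := memr i il.
  split; apply/negP => /eqP E.
  + by move: nxl; rewrite -E m1.
  + by move: hxl; rewrite -E m1.
  + by move: nxl; rewrite -E m2.
  + by move: hxl; rewrite -E m2.
- exact: IH.
Qed.

Lemma sum_bool (n : nat) (P : 'I_n -> bool) :
  (\sum_(a : 'I_n) (P a : nat) = #|[set a | P a]|)%N.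
Proof.
rewrite -sum1_card [RHS]big_mkcond /=; apply: eq_bigr => a _; rewrite inE; by case: (P a).
Qed.

Theorem lemma3 (R : realType) (q n : nat) (F : 'I_n -> rect R) :
  (2 <= q)%N ->
  (forall i, rect_wf (F i)) ->
  general_position F ->
  (forall i j : 'I_n, i != j -> rects_intersect (F i) (F j) ->
     corner_intersection (F i) (F j)) ->
  (forall S : {set 'I_n},
     (forall i j, i \in S -> j \in S -> rects_intersect (F i) (F j)) ->
     (#|S| <= q)%N) ->
  exists V : seq (R * R),
    uniq V /\ (forall p, p \in V <-> is_joint F p) /\ (size V <= 4 * q * n)%N.
Proof.
move=> _ wf [gx gy] Hci Hq.
have GX := uniq_pairs _ _ _ _ _ gx; have GY := uniq_pairs _ _ _ _ _ gy.
have gpx : forall i j : 'I_n, i != j -> [/\ rx1 (F i) != rx1 (F j), rx1 (F i) != rx2 (F j),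
    rx2 (F i) != rx1 (F j) & rx2 (F i) != rx2 (F j)].
  by move=> i j ij; apply: GX; rewrite ?mem_enum.
have gpy : forall i j : 'I_n, i != j -> [/\ ry1 (F i) != ry1 (F j), ry1 (F i) != ry2 (F j),
    ry2 (F i) != ry1 (F j) & ry2 (F i) != ry2 (F j)].
  by move=> i j ij; apply: GY; rewrite ?mem_enum.
pose cand a b := [seq p <- pts (F a) (F b) | (a != b) && (in_rect (F a) p && in_rect (F b) p)].
pose L := flatten [seq flatten [seq cand a b | b <- index_enum 'I_n] | a <- index_enum 'I_n].
exists (undup L); split; first exact: undup_uniq.
split.
  move=> p; rewrite mem_undup; split.
    move=> /flatten_mapP[a _ /flatten_mapP[b _]].
    rewrite mem_filter => /andP[/and3P[ab ina inb] pin].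
    exists a, b; split => //.
    rewrite /on_boundary ina inb /=.
    move: pin; rewrite /pts !inE => /or4P[]/eqP-> /=; by rewrite !eqxx ?orbT.
  move=> [i [j [ij [/andP[ini bi] /andP[inj bj]]]]].
  have [x1 x2 x3 x4] := gpx i j ij; have [y1 y2 y3 y4] := gpy i j ij.
  have memL : forall a b, a != b -> in_rect (F a) p -> in_rect (F b) p ->
      p \in pts (F a) (F b) -> p \in L.
    move=> a b ab ia ib pp; apply/flatten_mapP; exists a; first exact: mem_index_enum.
    apply/flatten_mapP; exists b; first exact: mem_index_enum.
    by rewrite mem_filter ab ia ib pp.
  case: p ini bi inj bj memL => px py ini bi inj bj memL.
  move: bi bj => /= /or4P[]/eqP E1 /or4P[]/eqP E2; subst.
  all: try (by apply: (memL i j) => //; unfold pts; rewrite !inE ?xpair_eqE !eqxx ?orbT).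
  all: try (by apply: (memL j i) => //; [rewrite eq_sym | unfold pts; rewrite !inE ?xpair_eqE !eqxx ?orbT]).
  all: try (by move: x1; rewrite E2 eqxx).
  all: try (by move: x2; rewrite E2 eqxx).
  all: try (by move: x3; rewrite E2 eqxx).
  all: try (by move: x4; rewrite E2 eqxx).
  all: try (by move: y1; rewrite E2 eqxx).
  all: try (by move: y2; rewrite E2 eqxx).
  all: try (by move: y3; rewrite E2 eqxx).
  all: try (by move: y4; rewrite E2 eqxx).
apply: leq_trans (size_undup _) _.
have sizeL : size L = (\sum_(a : 'I_n) \sum_(b : 'I_n) ((a != b) * Qr (F a) (F b)))%N.
  rewrite /L size_flatten sumnE /shape !big_map; apply: eq_bigr => a _.
  rewrite size_flatten sumnE /shape !big_map; apply: eq_bigr => b _.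
  rewrite size_filter /Qr; case: (a != b) => /=; first by rewrite mul1n.
  by rewrite mul0n; elim: (pts (F a) (F b)).
pose Q a b := ((a != b) * Qr (F a) (F b))%N.
pose C a b := ((a != b) * n_corners_in (F a) (F b))%N.
have pairQC : forall a b, (Q a b + Q b a <= C a b + C b a)%N.
  move=> a b; rewrite /Q /C [b == a]eq_sym; case ab: (a != b) => //=; rewrite ?mul1n.
  have [x1 x2 x3 x4] := gpx a b ab; have [y1 y2 y3 y4] := gpy a b ab.
  by apply: pair_ineq => //; apply: Hci.
have sym : forall G : 'I_n -> 'I_n -> nat,
    (\sum_(a : 'I_n) \sum_(b : 'I_n) (G a b + G b a) = 2 * \sum_(a : 'I_n) \sum_(b : 'I_n) G a b)%N.
  move=> G; under eq_bigr do rewrite big_split; rewrite big_split /=.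
  by rewrite [X in (_ + X)%N]exchange_big mul2n addnn.
have QC : (\sum_(a : 'I_n) \sum_(b : 'I_n) Q a b <= \sum_(a : 'I_n) \sum_(b : 'I_n) C a b)%N.
  rewrite -(leq_pmul2l (isT : (0 < 2)%N)) -!sym.
  by apply: leq_sum => a _; apply: leq_sum => b _; apply: pairQC.
rewrite sizeL; apply: leq_trans QC _.
apply: (@leq_trans (\sum_(a : 'I_n) \sum_(b : 'I_n) n_corners_in (F a) (F b))%N).
  apply: leq_sum => a _; apply: leq_sum => b _; rewrite /C; case: (a != b) => //=.
  by rewrite mul1n.
rewrite exchange_big /=.
have cq : forall c : R * R, (\sum_(a : 'I_n) (in_rect (F a) c : nat) <= q)%N.
  move=> c; rewrite sum_bool; apply: Hq => i j; rewrite !inE => hi hj.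
  by exists c; rewrite hi hj.
apply: (@leq_trans (\sum_(b : 'I_n) (4 * q))%N).
  apply: leq_sum => b _; rewrite /n_corners_in /corners /=.
  under eq_bigr do rewrite addn0.
  rewrite !big_split /=.
  rewrite mulSn mulSn mulSn mul1n.
  by rewrite !leq_add.
by rewrite sum_nat_const card_ord mulnC.
Qed.
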